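(* If $M\in\mathrm{PGL}_2(\mathbb{Q})$ is such that $MAM^{-1}\in\mathrm{PSL}_2(\mathbb{Z})$ for every $A\in\Gamma^3$, then $M\in\mathrm{PSL}_2(\mathbb{Z})\cup\mathrm{PSL}_2(\mathbb{Z})J$, where $J=\left(\begin{smallmatrix}-1&0\\0&1\end{smallmatrix}\right)$.
   Context: $\Gamma^3=\{\left(\begin{smallmatrix}a&b\\c&d\end{smallmatrix}\right)\in\mathrm{PSL}_2(\mathbb{Z}) : ab+cd\equiv0\bmod3\}$. Elements of $\mathrm{PGL}_2(\mathbb{Q})$ are invertible rational $2\times2$ matrices modulo nonzero scalars. *)

(* Defs.v *)
From HB Require Import structures.
From mathcomp Require Import all_boot all_order all_algebra.
Set Implicit Arguments. Unset Strict Implicit. Unset Printing Implicit Defensive.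
Import Order.TTheory GRing.Theory Num.Theory.
Local Open Scope ring_scope.

Definition SL2Z (A : 'M[int]_2) : Prop := \det A = 1.

(* Gamma^3 : ab + cd = 0 mod 3 for A = [[a,b],[c,d]] (well defined on PSL_2). *)
Definition Gamma3 (A : 'M[int]_2) : Prop :=
  SL2Z A /\ (3 %| A ord0 ord0 * A ord0 ord_max + A ord_max ord0 * A ord_max ord_max)%Z.

Definition ratmx (A : 'M[int]_2) : 'M[rat]_2 := map_mx intr A.

(* An element of PGL_2(Q) is represented by an invertible rational matrix X;
   its class lies in (the image of) PSL_2(Z) iff X is a nonzero scalar
   multiple of an integer matrix of determinant 1. *)
Definition inPSL2Z (X : 'M[rat]_2) : Prop :=
  exists (c : rat) (B : 'M[int]_2), c != 0 /\ SL2Z B /\ X = c *: ratmx B.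

Definition Jmx : 'M[rat]_2 := \matrix_(i < 2, j < 2)
  (if i == j then (if i == ord0 then -1 else 1) else 0).

Definition inPSL2ZJ (X : 'M[rat]_2) : Prop :=
  exists (c : rat) (B : 'M[int]_2), c != 0 /\ SL2Z B /\ X = c *: (ratmx B *m Jmx).

(* Main.v *)
Require Import Defs.
From mathcomp Require Import all_boot all_order all_algebra.
From mathcomp Require Import ring.
Import GRing.Theory Num.Theory.
Local Open Scope ring_scope.
Set Implicit Arguments. Unset Strict Implicit.
Lemma det22 (R : comNzRingType) (A : 'M[R]_2) : \det A = A ord0 ord0 * A ord_max ord_max - A ord0 ord_max * A ord_max ord0.
Proof.
rewrite (expand_det_row _ ord0) !big_ord_recl big_ord0 /cofactor !det_mx11 !mxE /=.
rewrite addr0 expr0 mul1r expr1 /=.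
have -> : lift ord0 (0 : 'I_1) = ord_max :> 'I_2 by apply/val_inj.
have -> : lift ord_max (0 : 'I_1) = ord0 :> 'I_2 by apply/val_inj.
ring.
Qed.

Definition Zmx (X : 'M[rat]_2) := forall i j, X i j \is a Num.int.

Lemma intK (q : rat) : q \is a Num.int -> q = (numq q)%:~R.
Proof. by case/intrP => m ->; rewrite numq_int. Qed.

Lemma det_ratmx B : \det (ratmx B) = (\det B)%:~R.
Proof. by rewrite /ratmx det_map_mx. Qed.

Lemma step_a (M : 'M[rat]_2) A : M \in unitmx -> SL2Z A ->
  inPSL2Z (M *m ratmx A *m invmx M) -> Zmx (M *m ratmx A *m invmx M).
Proof.
move=> Mu hA [c [B [c0 [hB e]]]] i j.
have hc : c ^+ 2 = 1.
  have := congr1 determinant e.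
  rewrite detZ det_ratmx hB !det_mulmx det_inv det_ratmx hA mulr1 mulrV ?mulr1 //.
rewrite e !mxE.
move/eqP: hc; rewrite sqrf_eq1 => /orP[/eqP-> | /eqP->].
  by rewrite mul1r intr_int.
by rewrite mulN1r rpredN intr_int.
Qed.
Definition mk (a b c d : int) : 'M[int]_2 := \matrix_(i, j)
  if i == ord0 then (if j == ord0 then a else b) else (if j == ord0 then c else d).

Lemma ratmxD A B : ratmx (A + B) = ratmx A + ratmx B.
Proof. by apply/matrixP => i j; rewrite !mxE intrD. Qed.
Lemma ratmxZ (z : int) A : ratmx (z *: A) = z%:~R *: ratmx A.
Proof. by apply/matrixP => i j; rewrite !mxE intrM. Qed.
Lemma ratmx_delta (i j : 'I_2) : ratmx (delta_mx i j) = delta_mx i j.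
Proof. by apply/matrixP => a b; rewrite !mxE; case: (_ && _). Qed.

Definition fm (M : 'M[rat]_2) (Y : 'M[rat]_2) := M *m Y *m invmx M.
Definition P (M : 'M[rat]_2) (A : 'M[int]_2) := Zmx (fm M (ratmx A)).
Lemma PD M A B : P M A -> P M B -> P M (A + B).
Proof. by move=> hA hB i j; rewrite /P /fm ratmxD mulmxDr mulmxDl mxE rpredD. Qed.
Lemma PZ M z A : P M A -> P M (z *: A).
Proof. by move=> hA i j; rewrite /P /fm ratmxZ -scalemxAr -scalemxAl mxE rpredM ?intr_int. Qed.

Lemma G3 a b c d : a * d - b * c = 1 -> (3 %| a * b + c * d)%Z -> Gamma3 (mk a b c d).
Proof. by move=> h1 h2; split; rewrite /SL2Z ?det22 !mxE. Qed.

Lemma P5 M (z1 z2 z3 z4 z5 : int) A1 A2 A3 A4 A5 :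
  P M A1 -> P M A2 -> P M A3 -> P M A4 -> P M A5 ->
  P M (z1 *: A1 + z2 *: A2 + z3 *: A3 + z4 *: A4 + z5 *: A5).
Proof. move=> h1 h2 h3 h4 h5; exact: (PD (PD (PD (PD (PZ z1 h1) (PZ z2 h2)) (PZ z3 h3)) (PZ z4 h4)) (PZ z5 h5)). Qed.

Lemma all_delta M : (forall A, Gamma3 A -> P M A) -> forall i j, P M (delta_mx i j).
Proof.
move=> H i j.
have HG : forall a b c d, a * d - b * c = 1 -> (3 %| a * b + c * d)%Z -> P M (mk a b c d).
  by move=> a b c d h1 h2; apply: H; apply: G3.
case: i => [[|[|//]] hi]; case: j => [[|[|//]] hj].
- have -> : delta_mx (Ordinal hi) (Ordinal hj) =
     (-2) *: mk 1 0 0 1 + (-1) *: mk 1 3 0 1 + (-1) *: mk 1 0 3 1 + 1 *: mk 1 1 1 2 + 2 *: mk 2 1 1 1 :> 'M[int]_2.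
    by apply/matrixP => a b; rewrite !mxE; case: a => [[|[|//]] ?]; case: b => [[|[|//]] ?]; reflexivity.
  by apply: P5; apply: HG; reflexivity.
- have -> : delta_mx (Ordinal hi) (Ordinal hj) =
     (-2) *: mk 1 0 0 1 + 1 *: mk 0 (-1) 1 0 + (-1) *: mk 1 0 3 1 + 1 *: mk 1 1 1 2 + 1 *: mk 2 1 1 1 :> 'M[int]_2.
    by apply/matrixP => a b; rewrite !mxE; case: a => [[|[|//]] ?]; case: b => [[|[|//]] ?]; reflexivity.
  by apply: P5; apply: HG; reflexivity.
- have -> : delta_mx (Ordinal hi) (Ordinal hj) =
     (-2) *: mk 1 0 0 1 + (-1) *: mk 0 (-1) 1 0 + (-1) *: mk 1 3 0 1 + 1 *: mk 1 1 1 2 + 1 *: mk 2 1 1 1 :> 'M[int]_2.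
    by apply/matrixP => a b; rewrite !mxE; case: a => [[|[|//]] ?]; case: b => [[|[|//]] ?]; reflexivity.
  by apply: P5; apply: HG; reflexivity.
- have -> : delta_mx (Ordinal hi) (Ordinal hj) =
     (-2) *: mk 1 0 0 1 + (-1) *: mk 1 3 0 1 + (-1) *: mk 1 0 3 1 + 2 *: mk 1 1 1 2 + 1 *: mk 2 1 1 1 :> 'M[int]_2.
    by apply/matrixP => a b; rewrite !mxE; case: a => [[|[|//]] ?]; case: b => [[|[|//]] ?]; reflexivity.
  by apply: P5; apply: HG; reflexivity.
Qed.
Lemma delta_prod (M N : 'M[rat]_2) i j k l : (M *m delta_mx i j *m N) k l = M k i * N j l.
Proof.
rewrite -(mul_delta_mx (0 : 'I_1)) mulmxA -colE -mulmxA -rowE mxE big_ord1 !mxE //.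
Qed.

Lemma unit_int (x y : int) : x * y = 1 -> x = 1 \/ x = -1.
Proof. by rewrite mulrC => /intUnitRing.unitzPl; rewrite qualifE => /orP[/eqP ->|/eqP ->]; [left|right]. Qed.
Lemma I2 (i : 'I_2) : i = ord0 \/ i = ord_max.
Proof. by case: i => [[|[|//]] h]; [left|right]; apply/val_inj. Qed.

Lemma content (x : 'M[rat]_2) : x != 0 ->
  exists t : rat, [/\ t != 0, (forall i j, t * x i j \is a Num.int) &
    forall y : rat, (forall i j, x i j * y \is a Num.int) -> y / t \is a Num.int].
Proof.
move=> x0.
pose o : 'I_2 := ord0. pose m : 'I_2 := ord_max.
pose D i j : rat := (denq (x i j))%:~R.
pose d := D o o * D o m * D m o * D m m.
have Dn : forall i j, D i j != 0 by move=> i j; rewrite /D intr_eq0 denq_neq0.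
have dn : d != 0 by rewrite /d !mulf_neq0.
have xD : forall i j, x i j * D i j \is a Num.int.
  by move=> i j; rewrite /D -numqE intr_int.
have dint : forall i j, x i j * d \is a Num.int.
  move=> i j; case: (I2 i) => ->; case: (I2 j) => ->.
  - have -> : x o o * d = (x o o * D o o) * (D o m * D m o * D m m) by rewrite /d; ring.
    by apply: rpredM; [exact: xD | rewrite /D !rpredM ?intr_int].
  - have -> : x o m * d = (x o m * D o m) * (D o o * D m o * D m m) by rewrite /d; ring.
    by apply: rpredM; [exact: xD | rewrite /D !rpredM ?intr_int].
  - have -> : x m o * d = (x m o * D m o) * (D o m * D o o * D m m) by rewrite /d; ring.
    by apply: rpredM; [exact: xD | rewrite /D !rpredM ?intr_int].
  - have -> : x m m * d = (x m m * D m m) * (D o m * D m o * D o o) by rewrite /d; ring.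
    by apply: rpredM; [exact: xD | rewrite /D !rpredM ?intr_int].
pose k i j := numq (x i j * d).
have Hk : forall i j, x i j * d = (k i j)%:~R by move=> i j; exact: intK.
pose g := gcdz (gcdz (k o o) (k o m)) (gcdz (k m o) (k m m)).
case: (Bezoutz (k o o) (k o m)) => u1 [v1 e1].
case: (Bezoutz (k m o) (k m m)) => u2 [v2 e2].
case: (Bezoutz (gcdz (k o o) (k o m)) (gcdz (k m o) (k m m))) => u3 [v3 e3].
have gdvd : forall i j, (g %| k i j)%Z.
  move=> i j; case: (I2 i) => ->; case: (I2 j) => ->.
  - exact: dvdz_trans (dvdz_gcdl _ _) (dvdz_gcdl _ _).
  - exact: dvdz_trans (dvdz_gcdl _ _) (dvdz_gcdr _ _).
  - exact: dvdz_trans (dvdz_gcdr _ _) (dvdz_gcdl _ _).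
  - exact: dvdz_trans (dvdz_gcdr _ _) (dvdz_gcdr _ _).
have g0 : g != 0.
  apply/negP; rewrite /g !gcdz_eq0 => /andP[/andP[h1 h2] /andP[h3 h4]].
  move/negP: x0; apply; apply/eqP/matrixP => i j; rewrite mxE.
  have : x i j * d = 0.
    rewrite Hk; case: (I2 i) => ->; case: (I2 j) => ->; by apply/eqP; rewrite intr_eq0.
  by move/eqP; rewrite mulf_eq0 (negPf dn) orbF => /eqP.
have gR0 : (g%:~R : rat) != 0 by rewrite intr_eq0.
exists (d / g%:~R); split.
- by rewrite mulf_neq0 // invr_eq0.
- move=> i j.
  have -> : d / g%:~R * x i j = (x i j * d) / g%:~R by ring.
  by rewrite Hk -(divzK (gdvd i j)) intrM mulfK // intr_int.
- move=> y hy.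
  have eg : (g%:~R : rat) = (u3 * u1)%:~R * (x o o * d) + (u3 * v1)%:~R * (x o m * d)
      + (v3 * u2)%:~R * (x m o * d) + (v3 * v2)%:~R * (x m m * d).
    rewrite !Hk -!intrM -!intrD; congr (_%:~R).
    by rewrite /g -e3 -e1 -e2; ring.
  have -> : y / (d / g%:~R) = (u3 * u1)%:~R * (x o o * y) + (u3 * v1)%:~R * (x o m * y)
      + (v3 * u2)%:~R * (x m o * y) + (v3 * v2)%:~R * (x m m * y).
    rewrite invfM invrK eg; field; exact: dn.
  by rewrite !rpredD // rpredM ?intr_int ?hy.
Qed.

Definition Jint : 'M[int]_2 := mk (-1) 0 0 1.

Lemma JJ : ratmx Jint *m Jmx = 1%:M.
Proof.
apply/matrixP => a b; rewrite !mxE !big_ord_recl big_ord0 !mxE.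
case: (I2 a) => ->; case: (I2 b) => ->; rewrite /= ?mxE /=.
all: by rewrite ?rmorphN1 ?rmorph0 ?rmorph1 ?mulN1r ?opprK ?mul0r ?mulr0 ?mul1r ?addr0.
Qed.

Theorem lemma3p2 (M : 'M[rat]_2) :
  M \in unitmx ->
  (forall A : 'M[int]_2, Gamma3 A -> inPSL2Z (M *m ratmx A *m invmx M)) ->
  inPSL2Z M \/ inPSL2ZJ M.
Proof.
move=> Mu H.
pose N := invmx M.
have hP : forall A, Gamma3 A -> P M A.
  by move=> A hA; exact: (step_a Mu hA.1 (H A hA)).
have hD := all_delta hP.
have prod : forall i j k l, M k i * N j l \is a Num.int.
  by move=> i j k l; rewrite -delta_prod; have := hD i j k l; rewrite /P /fm ratmx_delta.
have M0 : M != 0.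
  by apply: contraTneq Mu => ->; rewrite unitmxE det0 unitr0.
have [t [t0 ht hy]] := content M0.
pose B0 : 'M[int]_2 := \matrix_(i, j) numq (t * M i j).
have eB : ratmx B0 = t *: M by apply/matrixP => i j; rewrite !mxE -intK.
pose C0 : 'M[int]_2 := \matrix_(i, j) numq (N i j / t).
have eC : ratmx C0 = t^-1 *: N.
  apply/matrixP => i j; rewrite !mxE -intK ?[_ / t]mulrC //.
  by rewrite mulrC; apply: hy => a b; exact: prod.
have dd : \det B0 * \det C0 = 1.
  apply/eqP; rewrite -(eqr_int rat) rmorph1 rmorphM /= -!det_ratmx -det_mulmx eB eC.
  by rewrite -scalemxAl -scalemxAr scalerA mulfV // scale1r mulmxV // det1.
case: (unit_int dd) => hdet.
- left; exists t^-1, B0; split => //; first by rewrite invr_eq0.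
  by rewrite eB scalerA mulVf // scale1r.
- right; exists t^-1, (B0 *m Jint); split; [by rewrite invr_eq0 | split].
    by rewrite /SL2Z det_mulmx hdet det22 !mxE; reflexivity.
  by rewrite /ratmx map_mxM -mulmxA JJ mulmx1 -/(ratmx B0) eB scalerA mulVf // scale1r.
Qed.
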